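(* Let $0\le a<b$, $1<\alpha\le 2$, and let $q:[a,b]\to\mathbb{R}$ be continuous. Suppose the fractional boundary value problem $${}^{CF}D_a^{\alpha}u(t)+q(t)u(t)=0,\quad a<t<b,\qquad u(a)=u(b)=0,$$ has a nontrivial solution. Then $$\int_a^b|q(t)|\,dt\ \ge\ \begin{cases}\dfrac{1}{2-\alpha}, & \text{if } b-a<\dfrac{2-\alpha}{\alpha-1},\\[3mm] \dfrac{4(\alpha-1)(b-a)}{[(\alpha-1)(b-a)+(2-\alpha)]^2}, & \text{if } b-a\ge\dfrac{2-\alpha}{\alpha-1}.\end{cases}$$
   Context: ${}^{CF}D_a^{\alpha}$ denotes the Caputo–Fabrizio fractional derivative of order $\alpha\in(1,2]$ with lower terminal $a$: for a twice continuously differentiable $u$ on $[a,b]$ and $1<\alpha<2$, ${}^{CF}D_a^{\alpha}u(t)=\frac{1}{2-\alpha}\int_a^t \exp\!\big(-\frac{\alpha-1}{2-\alpha}(t-s)\big)u''(s)\,ds$, and for $\alpha=2$ it is $u''(t)$. A solution means a twice continuously differentiable function $u$ on $[a,b]$ satisfying the equation and boundary conditions; nontrivial means not identically zero. (The problem is equivalent to $u(t)=\int_a^b G(t,s)q(s)u(s)\,ds$ with $G(t,s)=\frac{b-t}{b-a}[(\alpha-1)(s-a)-2+\alpha]$ for $a\le s\le t\le b$ and $G(t,s)=\frac{t-a}{b-a}[(\alpha-1)(b-s)+2-\alpha]$ for $a\le t\le s\le b$.) *)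

(* Defs.v *)
From Stdlib Require Import Reals.
From Coquelicot Require Import Coquelicot.
Open Scope R_scope.

Definition Icc (a b t : R) : Prop := a <= t <= b.

Definition continuous_within_Icc (a b : R) (f : R -> R) (t : R) : Prop :=
  filterlim f (within (Icc a b) (locally t)) (locally (f t)).

Definition is_derive_Icc (a b : R) (f : R -> R) (t l : R) : Prop :=
  filterlim (fun h => (f (t + h) - f t) / h)
    (within (fun h => h <> 0 /\ Icc a b (t + h)) (locally 0)) (locally l).

Definition C2_on (a b : R) (u u1 u2 : R -> R) : Prop :=
  forall t, Icc a b t ->
    is_derive_Icc a b u t (u1 t) /\ is_derive_Icc a b u1 t (u2 t) /\
    continuous_within_Icc a b u2 t.

(* Caputo--Fabrizio derivative of order alpha in (1,2], expressed through
   the second derivative u2 of u. *)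
Definition CF_D (alpha a : R) (u2 : R -> R) (t : R) : R :=
  if Rlt_dec alpha 2 then
    / (2 - alpha) *
    RInt (fun s => exp (- ((alpha - 1) / (2 - alpha)) * (t - s)) * u2 s) a t
  else u2 t.

Definition lyap_bound (alpha a b : R) : R :=
  if Rlt_dec (b - a) ((2 - alpha) / (alpha - 1)) then / (2 - alpha)
  else 4 * (alpha - 1) * (b - a) / ((alpha - 1) * (b - a) + (2 - alpha)) ^ 2.

(* Main.v *)
Require Import Defs.
From Stdlib Require Import Reals Lra.
From Coquelicot Require Import Coquelicot.
Open Scope R_scope.

Lemma ball_R (x e y : R) : ball x e y <-> Rabs (y - x) < e.
Proof. unfold ball; simpl; unfold AbsRing_ball, abs, minus, plus, opp; simpl. tauto. Qed.

Definition ED (a b : R) (f : R -> R) (t : R) : Prop :=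
  forall eps, 0 < eps -> exists del, 0 < del /\
    forall x, a <= x <= b -> Rabs (x - t) < del -> Rabs (f x - f t) < eps.

Lemma cw_ED a b f t : continuous_within_Icc a b f t -> ED a b f t.
Proof.
  intros H eps He.
  apply (proj1 (filterlim_locally _ _)) with (eps := mkposreal eps He) in H.
  destruct H as [[d Hd] H]. exists d; split; [exact Hd|].
  intros x Hx Hxt. specialize (H x). apply ball_R. apply H; [apply ball_R; exact Hxt| exact Hx].
Qed.

Lemma der_ed a b f t l : is_derive_Icc a b f t l -> forall eps, 0 < eps -> exists del, 0 < del /\
  forall h, h <> 0 -> a <= t + h <= b -> Rabs h < del -> Rabs ((f (t+h) - f t)/h - l) < eps.
Proof.
  intros H eps He.
  apply (proj1 (filterlim_locally _ _)) with (eps := mkposreal eps He) in H.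
  destruct H as [[d Hd] H]. exists d; split; [exact Hd|].
  intros h H0 Hh Hd'. specialize (H h). apply ball_R. apply H; [apply ball_R; rewrite Rminus_0_r; exact Hd'| split; assumption].
Qed.

Lemma der_interior a b f t l : a < t < b -> is_derive_Icc a b f t l -> derivable_pt_lim f t l.
Proof.
  intros Ht H eps He. destruct (der_ed a b f t l H eps He) as [d [Hd H']].
  assert (Hp : 0 < Rmin d (Rmin (t - a) (b - t))).
  { apply Rmin_pos; [lra| apply Rmin_pos; lra]. }
  exists (mkposreal _ Hp). intros h H0 Hh. simpl in Hh.
  assert (H1 := Rmin_l d (Rmin (t - a) (b - t))).
  assert (H2 := Rmin_r d (Rmin (t - a) (b - t))).
  assert (H3 := Rmin_l (t - a) (b - t)).
  assert (H4 := Rmin_r (t - a) (b - t)).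
  apply H'; [exact H0| |lra].
  apply Rabs_def2 in Hh. lra.
Qed.

Lemma der_ED a b f t l : Icc a b t -> is_derive_Icc a b f t l -> ED a b f t.
Proof.
  intros Ht H eps He. destruct (der_ed a b f t l H 1 Rlt_0_1) as [d [Hd H']].
  assert (Hl : 0 < Rabs l + 1) by (pose proof (Rabs_pos l); lra).
  assert (Hp : 0 < Rmin d (eps / (Rabs l + 1))).
  { apply Rmin_pos; [lra| apply Rdiv_lt_0_compat; lra]. }
  exists (Rmin d (eps / (Rabs l + 1))); split; [exact Hp|].
  intros x Hx Hxt.
  assert (H1 := Rmin_l d (eps / (Rabs l + 1))).
  assert (H2 := Rmin_r d (eps / (Rabs l + 1))).
  destruct (Req_dec x t) as [->|Hne].
  { rewrite Rminus_diag, Rabs_R0; exact He. }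
  assert (Hh : x - t <> 0) by lra.
  specialize (H' (x - t) Hh). replace (t + (x - t)) with x in H' by ring.
  assert (Hxd : Rabs (x - t) < d) by (eapply Rlt_le_trans; [exact Hxt| exact H1]). specialize (H' Hx Hxd).
  set (Q := (f x - f t) / (x - t)) in H'.
  assert (E : f x - f t = Q * (x - t)) by (unfold Q; field; exact Hh).
  rewrite E, Rabs_mult.
  assert (HQ : Rabs Q < Rabs l + 1).
  { pose proof (Rabs_triang (Q - l) l) as HT. replace (Q - l + l) with Q in HT by ring. lra. }
  assert (Hxt2 : Rabs (x - t) < eps / (Rabs l + 1)) by (eapply Rlt_le_trans; [exact Hxt| exact H2]).
  apply Rle_lt_trans with ((Rabs l + 1) * Rabs (x - t)).
  { apply Rmult_le_compat_r; [apply Rabs_pos| lra]. }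
  apply Rmult_lt_compat_l with (r := Rabs l + 1) in Hxt2; [|exact Hl].
  replace ((Rabs l + 1) * (eps / (Rabs l + 1))) with eps in Hxt2 by (field; lra). exact Hxt2.
Qed.

Definition clamp (a b x : R) := Rmax a (Rmin b x).

Lemma clamp_in a b x : a <= b -> a <= clamp a b x <= b.
Proof. intros. unfold clamp, Rmax, Rmin. repeat destruct Rle_dec; lra. Qed.

Lemma clamp_id a b x : a <= x <= b -> clamp a b x = x.
Proof. intros. unfold clamp, Rmax, Rmin. repeat destruct Rle_dec; lra. Qed.

Lemma clamp_lip a b x y : a <= b -> Rabs (clamp a b x - clamp a b y) <= Rabs (x - y).
Proof. intros. unfold clamp, Rmax, Rmin. repeat destruct Rle_dec; unfold Rabs; repeat destruct Rcase_abs; lra. Qed.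

Lemma ED_clamp a b f : a <= b -> (forall t, a <= t <= b -> ED a b f t) ->
  forall t, continuity_pt (fun x => f (clamp a b x)) t.
Proof.
  intros Hab H t. unfold continuity_pt, continue_in, limit1_in, limit_in. simpl. unfold R_dist.
  intros eps He. destruct (H (clamp a b t) (clamp_in a b t Hab) eps He) as [d [Hd H']].
  exists d; split; [exact Hd|]. intros x [_ Hx].
  apply H'; [apply clamp_in; exact Hab|]. eapply Rle_lt_trans; [apply clamp_lip; exact Hab| exact Hx].
Qed.
Lemma mono (h h' : R -> R) x y : x < y ->
  (forall t, x <= t <= y -> continuity_pt h t) ->
  (forall t, x < t < y -> derivable_pt_lim h t (h' t)) ->
  (forall t, x < t < y -> 0 <= h' t) -> h x <= h y.
Proof.
  intros Hxy Hc Hd Hp.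
  pose (pr1 := fun c (P : x < c < y) => exist (fun l => derivable_pt_abs h c l) (h' c) (Hd c P)).
  pose (pr2 := fun c (P : x < c < y) => derivable_pt_id c).
  destruct (MVT h id x y pr1 pr2 Hxy Hc (fun c _ => derivable_continuous_pt _ _ (derivable_pt_id c))) as [c [P E]].
  rewrite derive_pt_id in E. simpl in E. unfold id in E.
  specialize (Hp c P). nra.
Qed.

Lemma compare (F F' G G' : R -> R) x y : x < y ->
  (forall t, x <= t <= y -> continuity_pt F t) ->
  (forall t, x <= t <= y -> continuity_pt G t) ->
  (forall t, x < t < y -> derivable_pt_lim F t (F' t)) ->
  (forall t, x < t < y -> derivable_pt_lim G t (G' t)) ->
  (forall t, x < t < y -> Rabs (F' t) <= G' t) ->
  Rabs (F y - F x) <= G y - G x.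
Proof.
  intros Hxy HcF HcG HdF HdG Hb.
  assert (A : G x - F x <= G y - F y).
  { apply (mono (fun t => G t - F t) (fun t => G' t - F' t) x y Hxy).
    - intros t Ht. apply continuity_pt_minus; auto.
    - intros t Ht. apply derivable_pt_lim_minus; auto.
    - intros t Ht. specialize (Hb t Ht). revert Hb; unfold Rabs; destruct Rcase_abs; intros; lra. }
  assert (B : G x + F x <= G y + F y).
  { apply (mono (fun t => G t + F t) (fun t => G' t + F' t) x y Hxy).
    - intros t Ht. apply continuity_pt_plus; auto.
    - intros t Ht. apply derivable_pt_lim_plus; auto.
    - intros t Ht. specialize (Hb t Ht). revert Hb; unfold Rabs; destruct Rcase_abs; intros; lra. }
  unfold Rabs; destruct Rcase_abs; lra.
Qed.
Lemma cpt_plus f g x : continuity_pt f x -> continuity_pt g x -> continuity_pt (fun y => f y + g y) x.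
Proof. intros; apply (continuity_pt_plus f g x); auto. Qed.
Lemma cpt_minus f g x : continuity_pt f x -> continuity_pt g x -> continuity_pt (fun y => f y - g y) x.
Proof. intros; apply (continuity_pt_minus f g x); auto. Qed.
Lemma cpt_mult f g x : continuity_pt f x -> continuity_pt g x -> continuity_pt (fun y => f y * g y) x.
Proof. intros; apply (continuity_pt_mult f g x); auto. Qed.
Lemma cpt_const k x : continuity_pt (fun _ => k) x.
Proof. apply continuity_pt_const. intros u v; reflexivity. Qed.
Lemma cpt_abs f x : continuity_pt f x -> continuity_pt (fun y => Rabs (f y)) x.
Proof. intros; apply (continuity_pt_comp f Rabs x); auto. apply Rcontinuity_abs. Qed.

Lemma dpl_plus f g x l1 l2 : derivable_pt_lim f x l1 -> derivable_pt_lim g x l2 -> derivable_pt_lim (fun y => f y + g y) x (l1 + l2).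
Proof. intros; apply (derivable_pt_lim_plus f g x); auto. Qed.
Lemma dpl_minus f g x l1 l2 : derivable_pt_lim f x l1 -> derivable_pt_lim g x l2 -> derivable_pt_lim (fun y => f y - g y) x (l1 - l2).
Proof. intros; apply (derivable_pt_lim_minus f g x); auto. Qed.
Lemma dpl_mult f g x l1 l2 : derivable_pt_lim f x l1 -> derivable_pt_lim g x l2 -> derivable_pt_lim (fun y => f y * g y) x (l1 * g x + f x * l2).
Proof. intros. apply (derivable_pt_lim_mult f g x); auto. Qed.
Lemma dpl_const k x : derivable_pt_lim (fun _ => k) x 0.
Proof. apply derivable_pt_lim_const. Qed.
Lemma dpl_id x : derivable_pt_lim (fun y => y) x 1.
Proof. apply derivable_pt_lim_id. Qed.
Lemma dpl_eq f x l l' : derivable_pt_lim f x l -> l = l' -> derivable_pt_lim f x l'.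
Proof. intros H ->; exact H. Qed.
Lemma dpl_cont f x l : derivable_pt_lim f x l -> continuity_pt f x.
Proof. intros H. apply (derivable_continuous_pt f x (exist _ l H)). Qed.
Lemma dpl_loc f g x l del : 0 < del -> (forall y, Rabs (y - x) < del -> f y = g y) ->
  derivable_pt_lim f x l -> derivable_pt_lim g x l.
Proof.
  intros Hd He H eps Heps. destruct (H eps Heps) as [d0 Hd0].
  assert (Hp : 0 < Rmin d0 del) by (apply Rmin_pos; [apply cond_pos| exact Hd]).
  exists (mkposreal _ Hp). intros h Hh Hh2. simpl in Hh2.
  assert (H1 := Rmin_l d0 del). assert (H2 := Rmin_r d0 del).
  rewrite <- (He (x + h)), <- (He x).
  - apply Hd0; [exact Hh| eapply Rlt_le_trans; [exact Hh2| exact H1]].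
  - rewrite Rminus_diag, Rabs_R0; exact Hd.
  - replace (x + h - x) with h by ring. eapply Rlt_le_trans; [exact Hh2| exact H2].
Qed.

Lemma int_der (h : R -> R) a : (forall t, continuity_pt h t) ->
  forall t, derivable_pt_lim (fun x => RInt h a x) t (h t).
Proof.
  intros Hc t. apply is_derive_Reals.
  apply (is_derive_RInt h (fun x => RInt h a x) a t).
  - apply filter_forall. intros x. apply (@RInt_correct R_CompleteNormedModule). apply (@ex_RInt_continuous R_CompleteNormedModule).
    intros z _. apply continuity_pt_filterlim. apply Hc.
  - apply continuity_pt_filterlim. apply Hc.
Qed.

Lemma exp_der k t : derivable_pt_lim (fun x => exp (- k * x)) t (- k * exp (- k * t)).
Proof.
  apply is_derive_Reals. auto_derive; [exact I|]. ring.
Qed.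
Lemma cpt_exp k x : continuity_pt (fun s => exp (k * s)) x.
Proof. apply (dpl_cont _ _ (k * exp (k * x))). apply is_derive_Reals. auto_derive; [exact I|]. ring. Qed.

Lemma W_der k (h : R -> R) a : (forall t, continuity_pt h t) -> forall t,
  derivable_pt_lim (fun x => exp (- k * x) * RInt (fun s => exp (k * s) * h s) a x) t
    (- k * (exp (- k * t) * RInt (fun s => exp (k * s) * h s) a t) + h t).
Proof.
  intros Hc t.
  eapply dpl_eq; [apply dpl_mult; [apply exp_der| apply int_der]|].
  - intros y. apply cpt_mult; [apply cpt_exp| apply Hc].
  - rewrite <- Rmult_assoc, <- exp_plus. replace (- k * t + k * t) with 0 by ring.
    rewrite exp_0. ring.
Qed.

Lemma W_eq k (h u2 : R -> R) a t : (forall t, continuity_pt h t) ->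
  (forall s, Rmin a t < s < Rmax a t -> h s = u2 s) ->
  RInt (fun s => exp (- k * (t - s)) * u2 s) a t = exp (- k * t) * RInt (fun s => exp (k * s) * h s) a t.
Proof.
  intros Hc He.
  rewrite (RInt_ext _ (fun s => scal (exp (- k * t)) (exp (k * s) * h s))).
  - rewrite (@RInt_scal R_CompleteNormedModule). reflexivity.
    apply (@ex_RInt_continuous R_CompleteNormedModule). intros z _.
    apply continuity_pt_filterlim. apply cpt_mult; [apply cpt_exp| apply Hc].
  - intros s Hs. rewrite He by exact Hs. change (scal ?x ?y) with (x * y).
    rewrite <- Rmult_assoc, <- exp_plus. f_equal. f_equal. ring.
Qed.
Definition Bf (c d L : R) : R :=
  if Rlt_dec L (d / c) then d else (c * L + d) ^ 2 / (4 * c * L).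

Lemma Bf_props c d L : 0 < c -> 0 <= d -> 0 < L ->
  0 < Bf c d L /\ d <= Bf c d L /\ (forall y, 0 <= y <= L -> y * (c * (L - y) + d) <= L * Bf c d L).
Proof.
  intros Hc Hd HL. unfold Bf. destruct Rlt_dec as [H|H].
  - assert (H1 : c * L < d).
    { apply Rmult_lt_compat_l with (r := c) in H; [|exact Hc].
      replace (c * (d / c)) with d in H by (field; lra). exact H. }
    assert (0 < c * L) by (apply Rmult_lt_0_compat; lra).
    split; [lra|]. split; [lra|]. intros y Hy.
    assert (c * y <= c * L) by (apply Rmult_le_compat_l; lra).
    assert (0 <= (L - y) * (d - c * y)) by (apply Rmult_le_pos; lra). nra.
  - apply Rnot_lt_le in H.
    assert (H1 : d <= c * L).
    { apply Rmult_le_compat_l with (r := c) in H; [|lra].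
      replace (c * (d / c)) with d in H by (field; lra). exact H. }
    assert (P : 0 < (c * L + d) ^ 2 / (4 * c * L)).
    { assert (0 < c * L) by (apply Rmult_lt_0_compat; lra). apply Rdiv_lt_0_compat; nra. }
    split; [exact P|]. split.
    + assert (E : (c * L + d) ^ 2 / (4 * c * L) - d = (c * L - d) ^ 2 / (4 * c * L)) by (field; lra).
      assert (0 <= (c * L - d) ^ 2 / (4 * c * L)).
      { assert (0 < c * L) by (apply Rmult_lt_0_compat; lra). apply Rmult_le_pos; [apply pow2_ge_0| left; apply Rinv_0_lt_compat; lra]. }
      lra.
    + intros y Hy.
      assert (E : L * ((c * L + d) ^ 2 / (4 * c * L)) - y * (c * (L - y) + d) = (c * L + d - 2 * c * y) ^ 2 / (4 * c)) by (field; lra).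
      assert (0 <= (c * L + d - 2 * c * y) ^ 2 / (4 * c)).
      { assert (0 < c * L) by (apply Rmult_lt_0_compat; lra). apply Rmult_le_pos; [apply pow2_ge_0| left; apply Rinv_0_lt_compat; lra]. }
      lra.
Qed.

Lemma wt1 c d L y x : 0 < c -> 0 <= d -> 0 < L -> 0 <= y <= L -> 0 <= x <= L - y ->
  y * Rabs (c * x - d) <= L * Bf c d L.
Proof.
  intros Hc Hd HL Hy Hx. destruct (Bf_props c d L Hc Hd HL) as [P1 [P2 P3]].
  specialize (P3 y Hy).
  assert (0 <= y * (c * x)) by (apply Rmult_le_pos; [lra| apply Rmult_le_pos; lra]).
  assert (y * (c * x) <= y * (c * (L - y))) by (apply Rmult_le_compat_l; [lra| apply Rmult_le_compat_l; lra]).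
  assert (y * d <= L * d) by (apply Rmult_le_compat_r; lra).
  assert (L * d <= L * Bf c d L) by (apply Rmult_le_compat_l; lra).
  assert (0 <= y * d) by (apply Rmult_le_pos; lra).
  unfold Rabs; destruct Rcase_abs.
  - nra.
  - nra.
Qed.

Lemma wt2 c d L x z : 0 < c -> 0 <= d -> 0 < L -> 0 <= x <= L -> 0 <= z <= L - x ->
  x * (c * z + d) <= L * Bf c d L.
Proof.
  intros Hc Hd HL Hx Hz. destruct (Bf_props c d L Hc Hd HL) as [P1 [P2 P3]].
  specialize (P3 x Hx).
  assert (x * (c * z) <= x * (c * (L - x))) by (apply Rmult_le_compat_l; [lra| apply Rmult_le_compat_l; lra]).
  nra.
Qed.
Theorem theorem2 (a b alpha : R) (q : R -> R)
  (ha : 0 <= a) (hab : a < b) (hal1 : 1 < alpha) (hal2 : alpha <= 2)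
  (hq : forall t, Icc a b t -> continuous_within_Icc a b q t) :
  (exists u u1 u2 : R -> R,
      C2_on a b u u1 u2 /\
      (forall t, a < t < b -> CF_D alpha a u2 t + q t * u t = 0) /\
      u a = 0 /\ u b = 0 /\
      (exists t, Icc a b t /\ u t <> 0)) ->
  RInt (fun t => Rabs (q t)) a b >= lyap_bound alpha a b.
Proof.
  intros [u [u1 [u2 [HC [Heq [Hua [Hub [t1 [Ht1 Hut1]]]]]]]]].
  assert (Hab' : a <= b) by lra.
  assert (HuED : forall t, a <= t <= b -> ED a b u t)
    by (intros t Ht; exact (der_ED a b u t (u1 t) Ht (proj1 (HC t Ht)))).
  assert (Hu1ED : forall t, a <= t <= b -> ED a b u1 t)
    by (intros t Ht; exact (der_ED a b u1 t (u2 t) Ht (proj1 (proj2 (HC t Ht))))).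
  assert (Hu2ED : forall t, a <= t <= b -> ED a b u2 t)
    by (intros t Ht; exact (cw_ED a b u2 t (proj2 (proj2 (HC t Ht))))).
  assert (HqED : forall t, a <= t <= b -> ED a b q t)
    by (intros t Ht; exact (cw_ED a b q t (hq t Ht))).
  pose proof (ED_clamp a b u Hab' HuED) as Cu.
  pose proof (ED_clamp a b u1 Hab' Hu1ED) as Cu1.
  pose proof (ED_clamp a b u2 Hab' Hu2ED) as Cu2.
  pose proof (ED_clamp a b q Hab' HqED) as Cq.
  assert (Ccl : forall t, continuity_pt (fun x => clamp a b x) t).
  { apply (ED_clamp a b (fun x => x) Hab'). intros t _ eps He. exists eps; split; [exact He|].
    intros x _ Hx. exact Hx. }
  assert (Du : forall t, a < t < b -> derivable_pt_lim u t (u1 t)).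
  { intros t Ht. apply (der_interior a b); [exact Ht|]. apply (HC t). unfold Icc; lra. }
  assert (Du1 : forall t, a < t < b -> derivable_pt_lim u1 t (u2 t)).
  { intros t Ht. apply (der_interior a b); [exact Ht|]. apply (HC t). unfold Icc; lra. }
  destruct (continuity_ab_maj (fun x => Rabs (u (clamp a b x))) a b Hab'
              (fun c _ => cpt_abs _ _ (Cu c))) as [t0 [Hmax Ht0]].
  assert (Hmax' : forall s, a <= s <= b -> Rabs (u s) <= Rabs (u t0)).
  { intros s Hs. specialize (Hmax s Hs). simpl in Hmax.
    rewrite (clamp_id a b s Hs), (clamp_id a b t0 Ht0) in Hmax. exact Hmax. }
  assert (HM : 0 < Rabs (u t0)).
  { pose proof (Rabs_pos_lt _ Hut1). pose proof (Hmax' t1 Ht1). lra. }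
  assert (Ht0a : t0 <> a) by (intro E; rewrite E, Hua, Rabs_R0 in HM; lra).
  assert (Ht0b : t0 <> b) by (intro E; rewrite E, Hub, Rabs_R0 in HM; lra).
  assert (Ht0' : a < t0 < b) by lra.
  pose (g := fun t => u1 t + (2 - alpha) * (q t * u t)).
  assert (Hg : forall t, a < t < b -> derivable_pt_lim g t (- (alpha - 1) * (q t * u t))).
  { intros t Ht. destruct (Rlt_dec alpha 2) as [Hlt|Hge].
    - pose (W := fun x => exp (- ((alpha - 1) / (2 - alpha)) * x) *
                   RInt (fun s => exp ((alpha - 1) / (2 - alpha) * s) * u2 (clamp a b s)) a x).
      assert (Hloc : forall s, a < s < b -> u1 s - W s = g s).
      { intros s Hs. specialize (Heq s Hs). unfold CF_D in Heq.
        destruct (Rlt_dec alpha 2) as [_|Hn]; [|contradiction].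
        rewrite (W_eq ((alpha - 1) / (2 - alpha)) (fun s => u2 (clamp a b s)) u2 a s Cu2) in Heq.
        2:{ intros s0 Hs0. rewrite Rmin_left, Rmax_right in Hs0 by lra. rewrite clamp_id by lra. reflexivity. }
        unfold W, g. set (X := exp _ * RInt _ a s) in *.
        replace (q s * u s) with (- (/ (2 - alpha) * X)) by lra. field. lra. }
      assert (Hd : 0 < Rmin (t - a) (b - t)) by (apply Rmin_pos; lra).
      apply (dpl_loc (fun x => u1 x - W x) g t _ _ Hd).
      + intros y Hy. apply Hloc. pose proof (Rmin_l (t - a) (b - t)). pose proof (Rmin_r (t - a) (b - t)).
        apply Rabs_def2 in Hy. lra.
      + eapply dpl_eq; [apply dpl_minus; [apply Du1; exact Ht| apply W_der; exact Cu2]|].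
        cbv beta. fold (W t). rewrite (clamp_id a b t) by lra.
        assert (E := Hloc t Ht). unfold g in E.
        assert (EW : W t = - ((2 - alpha) * (q t * u t))) by lra.
        rewrite EW. field. lra.
    - assert (Ha2 : alpha = 2) by lra.
      assert (E := Heq t Ht). unfold CF_D in E. destruct (Rlt_dec alpha 2) as [Hn|_]; [contradiction|].
      apply (dpl_loc u1 g t _ 1 Rlt_0_1).
      + intros y _. unfold g. rewrite Ha2. ring.
      + eapply dpl_eq; [apply Du1; exact Ht|]. rewrite Ha2. lra. }
  assert (Cg : forall t, continuity_pt (fun x => g (clamp a b x)) t).
  { intros t. unfold g. apply cpt_plus; [apply Cu1| apply cpt_mult; [apply cpt_const| apply cpt_mult; [apply Cq| apply Cu]]]. }
  destruct (Bf_props (alpha - 1) (2 - alpha) (b - a) ltac:(lra) ltac:(lra) ltac:(lra)) as [HB0 [HBd HBw]].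
  set (B := Bf (alpha - 1) (2 - alpha) (b - a)) in *.
  set (M := Rabs (u t0)) in *.
  pose (Q := fun x => RInt (fun s => Rabs (q (clamp a b s))) a x).
  pose (Gf := fun x => (b - a) * B * M * Q x).
  assert (DG : forall t, derivable_pt_lim Gf t ((b - a) * B * M * Rabs (q (clamp a b t)))).
  { intros t. eapply dpl_eq; [apply dpl_mult; [apply dpl_const| apply int_der]|].
    - intros y. apply cpt_abs. apply Cq.
    - cbv beta. ring. }
  assert (CG : forall t, continuity_pt Gf t) by (intros t; exact (dpl_cont _ _ _ (DG t))).
  pose (F1 := fun x => (b - t0) * ((clamp a b x - a) * g (clamp a b x) - u (clamp a b x))).
  assert (C1 : Rabs (F1 t0 - F1 a) <= Gf t0 - Gf a).
  { apply (compare F1 (fun t => (b - t0) * (- ((alpha - 1) * (t - a) - (2 - alpha)) * (q t * u t)))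
             Gf (fun t => (b - a) * B * M * Rabs (q (clamp a b t))) a t0); [lra| | | | |].
    - intros t _. unfold F1. apply cpt_mult; [apply cpt_const|].
      apply cpt_minus; [apply cpt_mult; [apply cpt_minus; [apply Ccl| apply cpt_const]| apply Cg]| apply Cu].
    - intros t _. apply CG.
    - intros t Ht. assert (Hd : 0 < Rmin (t - a) (b - t)) by (apply Rmin_pos; lra).
      apply (dpl_loc (fun x => (b - t0) * ((x - a) * g x - u x)) F1 t _ _ Hd).
      + intros y Hy. pose proof (Rmin_l (t - a) (b - t)). pose proof (Rmin_r (t - a) (b - t)).
        apply Rabs_def2 in Hy. unfold F1. rewrite (clamp_id a b y) by lra. reflexivity.
      + eapply dpl_eq.
        * apply dpl_mult; [apply dpl_const|]. apply dpl_minus; [apply dpl_mult; [apply dpl_minus; [apply dpl_id| apply dpl_const]| apply Hg; lra]| apply Du; lra].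
        * unfold g. ring.
    - intros t _. apply DG.
    - intros t Ht. rewrite (clamp_id a b t) by lra.
      rewrite !Rabs_mult, Rabs_Ropp, (Rabs_pos_eq (b - t0)) by lra.
      assert (W1 : (b - t0) * Rabs ((alpha - 1) * (t - a) - (2 - alpha)) <= (b - a) * B).
      { apply wt1; lra. }
      assert (W0 : 0 <= (b - t0) * Rabs ((alpha - 1) * (t - a) - (2 - alpha))).
      { apply Rmult_le_pos; [lra| apply Rabs_pos]. }
      assert (U1 : Rabs (u t) <= M) by (apply Hmax'; lra).
      pose proof (Rabs_pos (q t)). pose proof (Rabs_pos (u t)).
      assert (K : Rabs (q t) * Rabs (u t) <= Rabs (q t) * M) by (apply Rmult_le_compat_l; lra).
      assert (K2 : (b - t0) * Rabs ((alpha - 1) * (t - a) - (2 - alpha)) * (Rabs (q t) * Rabs (u t))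
                   <= (b - a) * B * (Rabs (q t) * M)).
      { apply Rmult_le_compat; [exact W0| apply Rmult_le_pos; lra| exact W1| exact K]. }
      lra. }
  pose (F2 := fun x => (t0 - a) * ((b - clamp a b x) * g (clamp a b x) + u (clamp a b x))).
  assert (C2 : Rabs (F2 b - F2 t0) <= Gf b - Gf t0).
  { apply (compare F2 (fun t => (t0 - a) * (- ((alpha - 1) * (b - t) + (2 - alpha)) * (q t * u t)))
             Gf (fun t => (b - a) * B * M * Rabs (q (clamp a b t))) t0 b); [lra| | | | |].
    - intros t _. unfold F2. apply cpt_mult; [apply cpt_const|].
      apply cpt_plus; [apply cpt_mult; [apply cpt_minus; [apply cpt_const| apply Ccl]| apply Cg]| apply Cu].
    - intros t _. apply CG.
    - intros t Ht. assert (Hd : 0 < Rmin (t - a) (b - t)) by (apply Rmin_pos; lra).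
      apply (dpl_loc (fun x => (t0 - a) * ((b - x) * g x + u x)) F2 t _ _ Hd).
      + intros y Hy. pose proof (Rmin_l (t - a) (b - t)). pose proof (Rmin_r (t - a) (b - t)).
        apply Rabs_def2 in Hy. unfold F2. rewrite (clamp_id a b y) by lra. reflexivity.
      + eapply dpl_eq.
        * apply dpl_mult; [apply dpl_const|]. apply dpl_plus; [apply dpl_mult; [apply dpl_minus; [apply dpl_const| apply dpl_id]| apply Hg; lra]| apply Du; lra].
        * unfold g. ring.
    - intros t _. apply DG.
    - intros t Ht. rewrite (clamp_id a b t) by lra.
      rewrite !Rabs_mult, Rabs_Ropp, (Rabs_pos_eq (t0 - a)) by lra.
      rewrite (Rabs_pos_eq ((alpha - 1) * (b - t) + (2 - alpha))).
      2:{ assert (0 <= (alpha - 1) * (b - t)) by (apply Rmult_le_pos; lra). lra. }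
      assert (W1 : (t0 - a) * ((alpha - 1) * (b - t) + (2 - alpha)) <= (b - a) * B).
      { apply wt2; lra. }
      assert (W0 : 0 <= (t0 - a) * ((alpha - 1) * (b - t) + (2 - alpha))).
      { apply Rmult_le_pos; [lra|]. assert (0 <= (alpha - 1) * (b - t)) by (apply Rmult_le_pos; lra). lra. }
      assert (U1 : Rabs (u t) <= M) by (apply Hmax'; lra).
      pose proof (Rabs_pos (q t)). pose proof (Rabs_pos (u t)).
      assert (K : Rabs (q t) * Rabs (u t) <= Rabs (q t) * M) by (apply Rmult_le_compat_l; lra).
      assert (K2 : (t0 - a) * ((alpha - 1) * (b - t) + (2 - alpha)) * (Rabs (q t) * Rabs (u t))
                   <= (b - a) * B * (Rabs (q t) * M)).
      { apply Rmult_le_compat; [exact W0| apply Rmult_le_pos; lra| exact W1| exact K]. }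
      lra. }
  assert (Qa : Q a = 0) by (unfold Q; rewrite RInt_point; reflexivity).
  assert (Qb : Q b = RInt (fun t => Rabs (q t)) a b).
  { unfold Q. apply RInt_ext. intros x Hx. rewrite Rmin_left, Rmax_right in Hx by lra.
    rewrite clamp_id by lra. reflexivity. }
  unfold Gf in C1, C2. unfold F1, F2 in C1, C2.
  rewrite (clamp_id a b a), (clamp_id a b t0) in C1 by lra.
  rewrite (clamp_id a b b), (clamp_id a b t0) in C2 by lra.
  rewrite Hua in C1. rewrite Hub in C2.
  assert (Key : (b - a) * M <= (b - a) * B * M * (Q b - Q a)).
  { unfold M. replace ((b - a) * Rabs (u t0)) with
      (Rabs ((b - t0) * ((t0 - a) * g t0 - u t0) - (b - t0) * ((a - a) * g a - 0) +
             ((t0 - a) * ((b - b) * g b + 0) - (t0 - a) * ((b - t0) * g t0 + u t0)))).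
    - eapply Rle_trans; [apply Rabs_triang|]. fold M. lra.
    - replace ((b - t0) * ((t0 - a) * g t0 - u t0) - (b - t0) * ((a - a) * g a - 0) +
             ((t0 - a) * ((b - b) * g b + 0) - (t0 - a) * ((b - t0) * g t0 + u t0)))
        with (- (b - a) * u t0) by ring.
      rewrite Rabs_mult, Rabs_Ropp, Rabs_pos_eq by lra. reflexivity. }
  rewrite Qa, Qb, Rminus_0_r in Key.
  set (I := RInt (fun t => Rabs (q t)) a b) in *.
  assert (Hly : lyap_bound alpha a b = / B).
  { unfold B, lyap_bound, Bf. destruct Rlt_dec as [h|h].
    - reflexivity.
    - assert (0 < (alpha - 1) * (b - a)) by (apply Rmult_lt_0_compat; lra).
      rewrite Rinv_div. unfold Rdiv. rewrite Rmult_assoc. reflexivity. }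
  assert (H1 : 1 <= B * I).
  { assert (0 < (b - a) * M) by (apply Rmult_lt_0_compat; lra).
    apply (Rmult_le_reg_l ((b - a) * M)); [lra|]. lra. }
  rewrite Hly. apply Rle_ge. apply (Rmult_le_reg_l B); [lra|]. rewrite Rinv_r by lra. exact H1.
Qed.
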